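(* Let $(X,\tau)$ be a $\mathbb{B}$-topological space. Then $(X,\tau)$ is d-sober if and only if every irreducible closed set $\gamma$ of $(X,\tau)$ satisfying (a) for every closed set $\mu$ of $(X,\tau)$ with $\mu(z)\neq0$ for all $z\in X$, either $tt\wedge\gamma\le\mu$ or $ff\wedge\gamma\le\mu$, and (b) for every closed set $\mu$ of $(X,\tau)$ with $\mu(z)\neq1$ for all $z\in X$, $\gamma\not\le\mu$, equals the closure $\overline{1_x}$ for a unique point $x\in X$.
   Context: $\mathbb{B}=\{0,1,tt,ff\}$ is the four-element Boolean algebra with bottom $0$, top $1$, and $tt,ff$ incomparable complements; $\neg$ is its complement, $a\to b=\neg a\vee b$. $\mathbb{B}^X$ has pointwise order/operations; $b_X$ is the constant map $b$; $1_x$ sends $x$ to $1$ and others to $0$; $(b\wedge\lambda)(x)=b\wedge\lambda(x)$; $\lambda[b]=\{x:\lambda(x)\ge b\}$. A $\mathbb{B}$-topology $\tau\subseteq\mathbb{B}^X$ contains all constants and is closed under arbitrary joins and finite meets; $\gamma$ is closed if $\neg\gamma\in\tau$; $\overline{\lambda}$ is the meet of all closed sets above $\lambda$. $(X,\tau)$ is identified with the bitopological space $(X,\tau[tt],\tau[ff])$, $\tau[b]=\{\lambda[b]:\lambda\in\tau\}$. $\mathrm{sub}_X(\lambda,\mu)=\bigwedge_x(\lambda(x)\to\mu(x))$. A closed set $\gamma$ is irreducible if $\mathrm{sub}_X(\gamma,b_X)=b$ for all $b\in\mathbb{B}$ and $\mathrm{sub}_X(\gamma,\mu_1\vee\mu_2)=\mathrm{sub}_X(\gamma,\mu_1)\vee\mathrm{sub}_X(\gamma,\mu_2)$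 for all closed $\mu_1,\mu_2$. A d-point of $(X,\tau[tt],\tau[ff])$ is a pair of frame homomorphisms $p_{tt}\colon\tau[tt]\to\{0,1\}$, $p_{ff}\colon\tau[ff]\to\{0,1\}$ such that: if $U\in\tau[tt]$, $V\in\tau[ff]$, $U\cap V=\emptyset$ then $p_{tt}(U)=0$ or $p_{ff}(V)=0$; and if $U\cup V=X$ then $p_{tt}(U)=1$ or $p_{ff}(V)=1$. Each $x$ gives the d-point $[x]$ with $[x]_{tt}(U)=1\iff x\in U$, $[x]_{ff}(V)=1\iff x\in V$. The space is d-sober if every d-point is $[x]$ for a unique $x$. *)

(* Defs.v *)
(* The four-element Boolean algebra B = {0,1,tt,ff} is
   represented as bool * bool with the componentwise order:
   0 = (false,false), 1 = (true,true), tt = (true,false), ff = (false,true). *)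
From Stdlib Require Import Bool ClassicalEpsilon.

Definition B := (bool * bool)%type.
Definition B0 : B := (false, false).
Definition B1 : B := (true, true).
Definition Btt : B := (true, false).
Definition Bff : B := (false, true).

Definition Ble (a b : B) : Prop := (implb (fst a) (fst b) && implb (snd a) (snd b)) = true.
Definition Bmeet (a b : B) : B := (fst a && fst b, snd a && snd b).
Definition Bjoin (a b : B) : B := (fst a || fst b, snd a || snd b).
Definition Bneg (a : B) : B := (negb (fst a), negb (snd a)).
Definition Bimp (a b : B) : B := Bjoin (Bneg a) b.

Definition pb (P : Prop) : bool :=
  if excluded_middle_informative P then true else false.

Definition Bsup (P : B -> Prop) : B :=
  (pb (exists b, P b /\ fst b = true), pb (exists b, P b /\ snd b = true)).
Definition Binf (P : B -> Prop) : B :=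
  (pb (forall b, P b -> fst b = true), pb (forall b, P b -> snd b = true)).

Section BSets.
Variable X : Type.

Definition Bset := X -> B.
Definition constB (b : B) : Bset := fun _ => b.
Definition oneB (x : X) : Bset := fun y => if pb (y = x) then B1 else B0.
Definition leF (l m : Bset) : Prop := forall x, Ble (l x) (m x).
Definition meetF (l m : Bset) : Bset := fun x => Bmeet (l x) (m x).
Definition joinF (l m : Bset) : Bset := fun x => Bjoin (l x) (m x).
Definition negF (l : Bset) : Bset := fun x => Bneg (l x).
Definition cmeet (b : B) (l : Bset) : Bset := fun x => Bmeet b (l x).
Definition supF (S : Bset -> Prop) : Bset :=
  fun x => Bsup (fun b => exists l, S l /\ l x = b).

Definition Btopology (tau : Bset -> Prop) : Prop :=
  (forall b, tau (constB b)) /\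
  (forall S : Bset -> Prop, (forall l, S l -> tau l) -> tau (supF S)) /\
  (forall l m, tau l -> tau m -> tau (meetF l m)).

Definition Bclosed (tau : Bset -> Prop) (g : Bset) : Prop := tau (negF g).

Definition Bclosure (tau : Bset -> Prop) (l : Bset) : Bset :=
  fun x => Binf (fun b => exists g, Bclosed tau g /\ leF l g /\ g x = b).

Definition subX (l m : Bset) : B := Binf (fun b => exists x, b = Bimp (l x) (m x)).

Definition irreducible (tau : Bset -> Prop) (g : Bset) : Prop :=
  Bclosed tau g /\
  (forall b, subX g (constB b) = b) /\
  (forall m1 m2, Bclosed tau m1 -> Bclosed tau m2 ->
     subX g (joinF m1 m2) = Bjoin (subX g m1) (subX g m2)).

Definition setT : X -> Prop := fun _ => True.
Definition setI (U V : X -> Prop) : X -> Prop := fun x => U x /\ V x.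
Definition bigcup (S : (X -> Prop) -> Prop) : X -> Prop := fun x => exists U, S U /\ U x.

(* lambda[b] and tau[b] (as a family of subsets, up to extensional equality) *)
Definition cut (l : Bset) (b : B) : X -> Prop := fun x => Ble b (l x).
Definition opens (tau : Bset -> Prop) (b : B) (U : X -> Prop) : Prop :=
  exists l, tau l /\ forall x, U x <-> cut l b x.

Definition frame_hom (O : (X -> Prop) -> Prop) (p : (X -> Prop) -> bool) : Prop :=
  p setT = true /\
  (forall U V, O U -> O V -> p (setI U V) = p U && p V) /\
  (forall S, (forall U, S U -> O U) -> (p (bigcup S) = true <-> exists U, S U /\ p U = true)).

Definition dpoint (tau : Bset -> Prop) (ptt pff : (X -> Prop) -> bool) : Prop :=
  frame_hom (opens tau Btt) ptt /\ frame_hom (opens tau Bff) pff /\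
  (forall U V, opens tau Btt U -> opens tau Bff V ->
     (forall x, ~ (U x /\ V x)) -> ptt U = false \/ pff V = false) /\
  (forall U V, opens tau Btt U -> opens tau Bff V ->
     (forall x, U x \/ V x) -> ptt U = true \/ pff V = true).

(* the d-point [x], compared with (ptt, pff) as maps on the frames *)
Definition is_point_of (tau : Bset -> Prop) (ptt pff : (X -> Prop) -> bool) (x : X) : Prop :=
  (forall U, opens tau Btt U -> ptt U = pb (U x)) /\
  (forall V, opens tau Bff V -> pff V = pb (V x)).

Definition dsober (tau : Bset -> Prop) : Prop :=
  forall ptt pff, dpoint tau ptt pff -> exists! x, is_point_of tau ptt pff x.

End BSets.

Arguments constB {X}. Arguments oneB {X}. Arguments leF {X}. Arguments meetF {X}.
Arguments joinF {X}. Arguments negF {X}. Arguments cmeet {X}. Arguments supF {X}.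
Arguments Btopology {X}. Arguments Bclosed {X}. Arguments Bclosure {X}.
Arguments subX {X}. Arguments irreducible {X}. Arguments cut {X}. Arguments opens {X}.
Arguments frame_hom {X}. Arguments dpoint {X}. Arguments is_point_of {X}.
Arguments dsober {X}.

(* Main.v *)
Require Import Defs.
From Stdlib Require Import Bool Classical FunctionalExtensionality PropExtensionality ClassicalEpsilon.

Definition proj (i : bool) (v : B) : bool := if i then fst v else snd v.
Definition bi (i : bool) : B := if i then Btt else Bff.

Lemma pb_true (P : Prop) : pb P = true <-> P.
Proof. unfold pb; destruct (excluded_middle_informative P) as [p|n]; split; intro H; auto; try discriminate; contradiction. Qed.

Lemma pb_eq (P : Prop) (b : bool) : (b = true <-> P) -> b = pb P.
Proof. intro H. apply eq_true_iff_eq. rewrite pb_true. exact H. Qed.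

Lemma Beq (a b : B) : (forall i, proj i a = true <-> proj i b = true) -> a = b.
Proof. destruct a as [a1 a2], b as [b1 b2]; intro H.
 f_equal; apply eq_true_iff_eq; [apply (H true) | apply (H false)]. Qed.

Lemma Ble_iff (a b : B) : Ble a b <-> forall i, proj i a = true -> proj i b = true.
Proof. unfold Ble; rewrite andb_true_iff, !implb_true_iff. split.
 - intros [H1 H2] [|]; simpl; auto.
 - intro H; split; [apply (H true) | apply (H false)]. Qed.

Lemma Ble_bi i v : Ble (bi i) v <-> proj i v = true.
Proof. rewrite Ble_iff. destruct i; split; intro H.
 - apply (H true); reflexivity.
 - intros [|]; simpl; auto; discriminate.
 - apply (H false); reflexivity.
 - intros [|]; simpl; auto; discriminate. Qed.

Lemma proj_meet i a b : proj i (Bmeet a b) = proj i a && proj i b.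
Proof. destruct i; reflexivity. Qed.
Lemma proj_join i a b : proj i (Bjoin a b) = proj i a || proj i b.
Proof. destruct i; reflexivity. Qed.
Lemma proj_neg i a : proj i (Bneg a) = negb (proj i a).
Proof. destruct i; reflexivity. Qed.
Lemma proj_bi_same i : proj i (bi i) = true.
Proof. destruct i; reflexivity. Qed.
Lemma proj_bi_diff i j : i <> j -> proj j (bi i) = false.
Proof. destruct i, j; simpl; congruence. Qed.
Lemma Bsup_proj i P : proj i (Bsup P) = true <-> exists b, P b /\ proj i b = true.
Proof. destruct i; simpl; apply pb_true. Qed.
Lemma Binf_proj i P : proj i (Binf P) = true <-> forall b, P b -> proj i b = true.
Proof. destruct i; simpl; apply pb_true. Qed.

Lemma neg_neg (X : Type) (l : X -> B) : negF (negF l) = l.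
Proof. apply functional_extensionality; intro x. unfold negF, Bneg.
 destruct (l x) as [a b]; simpl; rewrite !negb_involutive; reflexivity. Qed.

Lemma L_subX_proj (X : Type) i (l m : X -> B) :
  proj i (subX l m) = true <-> forall x, proj i (l x) = true -> proj i (m x) = true.
Proof. unfold subX. rewrite Binf_proj. split.
 - intros H x Hl. specialize (H _ (ex_intro _ x eq_refl)). unfold Bimp in H.
   rewrite proj_join, proj_neg, Hl in H. exact H.
 - intros H b [x ->]. unfold Bimp; rewrite proj_join, proj_neg.
   destruct (proj i (l x)) eqn:E; simpl; auto. Qed.

Lemma L_tau_comp (X : Type) (tau : (X -> B) -> Prop) (Htau : Btopology tau) (h : X -> B) :
  (forall i, exists l, tau l /\ forall x, proj i (h x) = proj i (l x)) -> tau h.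
Proof. intro H.
 destruct (H true) as [l1 [Hl1 E1]]; destruct (H false) as [l2 [Hl2 E2]].
 destruct Htau as [Hc [Hs Hm]]. simpl in E1, E2.
 set (A := meetF (constB Btt) l1). set (Bf := meetF (constB Bff) l2).
 assert (E : h = supF (fun l => l = A \/ l = Bf)).
 { apply functional_extensionality; intro x. apply Beq; intro i. unfold supF. rewrite Bsup_proj. split.
   - intro Hi. destruct i.
     + exists (A x). split. exists A; auto. unfold A, meetF, constB; simpl in *. rewrite <- E1. exact Hi.
     + exists (Bf x). split. exists Bf; auto. unfold Bf, meetF, constB; simpl in *. rewrite <- E2. exact Hi.
   - intros [b [[l [[-> | ->] <-]] Hb]]; destruct i; unfold A, Bf, meetF, constB in Hb; simpl in *;
     try discriminate; [rewrite E1 | rewrite E2]; exact Hb. }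
 rewrite E. apply Hs. intros l [-> | ->]; apply Hm; auto. Qed.

Lemma L_open_meet (X : Type) (tau : (X -> B) -> Prop) (Htau : Btopology tau) i U V :
  opens tau (bi i) U -> opens tau (bi i) V -> opens tau (bi i) (setI X U V).
Proof. intros [l [Hl HU]] [m [Hm HV]]. exists (meetF l m). split.
 - apply Htau; auto.
 - intro x. unfold setI, cut, meetF in *. rewrite HU, HV, !Ble_bi, proj_meet, andb_true_iff. tauto. Qed.

Lemma L_open_T (X : Type) (tau : (X -> B) -> Prop) (Htau : Btopology tau) i :
  opens tau (bi i) (setT X).
Proof. exists (constB B1). split. apply Htau. intro x. unfold setT, cut, constB.
 rewrite Ble_bi. destruct i; simpl; tauto. Qed.

Lemma L_open_cl (X : Type) (tau : (X -> B) -> Prop) i l :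
  tau l -> opens tau (bi i) (fun z => proj i (l z) = true).
Proof. intro Hl. exists l. split; auto. intro x. unfold cut. rewrite Ble_bi. tauto. Qed.

Lemma L_open_compl_closed (X : Type) (tau : (X -> B) -> Prop) i g :
  Bclosed tau g -> opens tau (bi i) (fun z => proj i (g z) = false).
Proof. intro Hg. exists (negF g). split; auto. intro x. unfold cut, negF.
 rewrite Ble_bi, proj_neg, negb_true_iff. tauto. Qed.

Lemma L_closed_of_open (X : Type) (tau : (X -> B) -> Prop) l : tau l -> Bclosed tau (negF l).
Proof. intro H. unfold Bclosed. rewrite neg_neg. exact H. Qed.

Lemma L_closure_proj (X : Type) (tau : (X -> B) -> Prop) (Htau : Btopology tau) i x y :
  proj i (Bclosure tau (oneB x) y) = true <-> forall U, opens tau (bi i) U -> U y -> U x.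
Proof. unfold Bclosure; rewrite Binf_proj. split.
 - intros H U [l [Hl HU]] Hy. apply NNPP; intro Hx.
   set (k := meetF (constB (bi i)) l).
   assert (Hk : tau k) by (apply Htau; [apply Htau | exact Hl]).
   specialize (H (negF k y)).
   assert (Hly : proj i (l y) = true) by (apply Ble_bi, HU; exact Hy).
   assert (Hlx : proj i (l x) = false).
   { apply not_true_iff_false. intro E. apply Hx, HU, Ble_bi; exact E. }
   assert (C : proj i (negF k y) = true).
   { apply H. exists (negF k). split; [apply L_closed_of_open; exact Hk | split; auto].
     intro z. unfold oneB. destruct (pb (z = x)) eqn:Ez.
     - apply (proj1 (pb_true _)) in Ez; rewrite Ez. apply Ble_iff. intros j _. unfold negF, k, meetF, constB.
       rewrite proj_neg, proj_meet. destruct (bool_dec i j) as [<-|ne].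
       + rewrite Hlx, andb_false_r. reflexivity.
       + rewrite proj_bi_diff; auto.
     - unfold Ble; simpl; reflexivity. }
   unfold negF, k, meetF, constB in C. rewrite proj_neg, proj_meet, proj_bi_same, Hly in C.
   discriminate.
 - intros H b [g [Hg [Hle <-]]]. apply NNPP; intro Hn. apply not_true_is_false in Hn.
   pose proof (H _ (L_open_compl_closed X tau i g Hg) Hn) as Hx. simpl in Hx.
   specialize (Hle x). unfold oneB in Hle.
   assert (E : pb (x = x) = true) by (apply pb_true; reflexivity). rewrite E in Hle.
   rewrite Ble_iff in Hle. specialize (Hle i). destruct i; simpl in *; rewrite Hle in Hx; auto; discriminate. Qed.

Lemma L_point (X : Type) (tau : (X -> B) -> Prop) (Htau : Btopology tau)
  (ptt pff : (X -> Prop) -> bool) (g : X -> B) (Hcl : Bclosed tau g)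
  (Hch : forall i U, opens tau (bi i) U ->
     ((if i then ptt else pff) U = true <-> exists y, proj i (g y) = true /\ U y)) (x : X) :
  is_point_of tau ptt pff x <-> g = Bclosure tau (oneB x).
Proof.
 assert (core : forall i, (forall U, opens tau (bi i) U -> (if i then ptt else pff) U = pb (U x)) <->
    (forall y, proj i (g y) = true <-> proj i (Bclosure tau (oneB x) y) = true)).
 { intro i. split.
   - intros H y. rewrite (L_closure_proj X tau Htau). split.
     + intros Hy U HU HUy. apply (proj1 (pb_true _)). rewrite <- (H U HU). apply Hch; eauto.
     + intros Hy. apply NNPP; intro Hn. apply not_true_is_false in Hn.
       pose proof (L_open_compl_closed X tau i g Hcl) as HO.
       pose proof (Hy _ HO Hn) as Hx. simpl in Hx.
       assert (E := H _ HO).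
       assert (H0 : (if i then ptt else pff) (fun z => proj i (g z) = false) = true)
         by (rewrite E; apply pb_true; exact Hx).
       apply (Hch i _ HO) in H0. destruct H0 as [y' [H1 H2]]. congruence.
   - intros H U HU. apply pb_eq. rewrite (Hch i U HU). split.
     + intros [y [Hy HUy]]. apply H in Hy. rewrite (L_closure_proj X tau Htau) in Hy. exact (Hy U HU HUy).
     + intro Hx. exists x. split; auto. apply H. rewrite (L_closure_proj X tau Htau). auto. }
 unfold is_point_of. split.
 - intros [H1 H2]. apply functional_extensionality; intro y. apply Beq; intro i.
   destruct i; [apply (proj1 (core true)) | apply (proj1 (core false))]; auto.
 - intro E. split; [apply (proj2 (core true)) | apply (proj2 (core false))]; intro y; rewrite E; tauto.
Qed.

Theorem mainTheorem10 (X : Type) (tau : (X -> B) -> Prop) (Htau : Btopology tau) :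
  dsober tau <->
  (forall g : X -> B,
     irreducible tau g ->
     (forall mu, Bclosed tau mu -> (forall z, mu z <> B0) ->
        leF (cmeet Btt g) mu \/ leF (cmeet Bff g) mu) ->
     (forall mu, Bclosed tau mu -> (forall z, mu z <> B1) -> ~ leF g mu) ->
     exists! x : X, g = Bclosure tau (oneB x)).
Proof.
 split.
 - intros Hds g [Hcl [Hconst Hjoin]] Ha Hb.
   set (P := fun (i : bool) (U : X -> Prop) => pb (exists y, proj i (g y) = true /\ U y)).
   assert (Hch : forall i U, opens tau (bi i) U ->
     ((if i then P true else P false) U = true <-> exists y, proj i (g y) = true /\ U y)).
   { intros [|] U _; unfold P; apply pb_true. }
   assert (Hfh : forall i, frame_hom (opens tau (bi i)) (P i)).
   { intro i. split; [|split].
     - unfold P. apply pb_true. assert (H0 := Hconst B0).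
       assert (H1 : proj i (subX g (constB B0)) = false) by (rewrite H0; destruct i; reflexivity).
       apply NNPP; intro Hn. rewrite <- not_true_iff_false in H1. apply H1.
       apply L_subX_proj. intros x Hx. exfalso; apply Hn; exists x; split; [exact Hx | exact I].
     - intros U V HU HV. apply eq_true_iff_eq. rewrite andb_true_iff. unfold P; rewrite !pb_true. split.
       + intros [y [Hy [HUy HVy]]]; split; eauto.
       + intros [[y1 [Hy1 HU1]] [y2 [Hy2 HV2]]]. apply NNPP; intro Hn.
         destruct HU as [l1 [Hl1 HU]]. destruct HV as [l2 [Hl2 HV]].
         assert (Hj := Hjoin (negF l1) (negF l2) (L_closed_of_open X tau l1 Hl1) (L_closed_of_open X tau l2 Hl2)).
         assert (Hp : proj i (subX g (joinF (negF l1) (negF l2))) = true).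
         { apply L_subX_proj. intros x Hx. unfold joinF, negF. rewrite proj_join, !proj_neg.
           destruct (proj i (l1 x)) eqn:E1; destruct (proj i (l2 x)) eqn:E2; simpl; auto.
           exfalso; apply Hn. exists x. split; auto. unfold setI, cut in *.
           split; [apply HU | apply HV]; apply Ble_bi; auto. }
         rewrite Hj, proj_join in Hp. apply orb_true_iff in Hp.
         unfold cut in *.
         destruct Hp as [Hp|Hp]; rewrite L_subX_proj in Hp.
         * specialize (Hp y1 Hy1). unfold negF in Hp; rewrite proj_neg in Hp.
           apply HU, Ble_bi in HU1. rewrite HU1 in Hp; discriminate.
         * specialize (Hp y2 Hy2). unfold negF in Hp; rewrite proj_neg in Hp.
           apply HV, Ble_bi in HV2. rewrite HV2 in Hp; discriminate.
     - intros S HS. unfold P. rewrite pb_true. split.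
       + intros [y [Hy [U [HSU HUy]]]]. exists U. split; auto. apply pb_true. eauto.
       + intros [U [HSU HU]]. apply (proj1 (pb_true _)) in HU. destruct HU as [y [Hy HUy]].
         exists y. split; auto. exists U; auto. }
   assert (Hdp : dpoint tau (P true) (P false)).
   { split; [exact (Hfh true) | split; [exact (Hfh false) | split]].
     - intros U V [l1 [Hl1 HU]] [l2 [Hl2 HV]] Hdisj.
       set (mu := fun z => (negb (fst (l1 z)), negb (snd (l2 z)))).
       assert (Hmu : Bclosed tau mu).
       { unfold Bclosed. apply L_tau_comp; auto. intros [|]; [exists l1 | exists l2]; split; auto;
         intro x; unfold negF, mu, Bneg; simpl; apply negb_involutive. }
       assert (Hne : forall z, mu z <> B0).
       { intros z E. unfold mu, B0 in E. injection E; intros E2 E1.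
         apply negb_false_iff in E1. apply negb_false_iff in E2.
         apply (Hdisj z). unfold cut in *. split; [apply HU | apply HV];
         [apply (Ble_bi true) | apply (Ble_bi false)]; assumption. }
       unfold cut in *.
       destruct (Ha mu Hmu Hne) as [H|H]; [left|right]; unfold P; apply not_true_iff_false;
         rewrite pb_true; intros [y [Hy HUy]]; specialize (H y); unfold cmeet in H;
         rewrite Ble_iff in H.
       + specialize (H true). simpl in H. apply HU, (proj1 (Ble_bi true _)) in HUy. simpl in *.
         rewrite HUy in H. simpl in H. specialize (H Hy). discriminate.
       + specialize (H false). simpl in H. apply HV, (proj1 (Ble_bi false _)) in HUy. simpl in *.
         rewrite HUy in H. simpl in H. specialize (H Hy). discriminate.
     - intros U V [l1 [Hl1 HU]] [l2 [Hl2 HV]] Hcov.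
       set (mu := fun z => (negb (fst (l1 z)), negb (snd (l2 z)))).
       assert (Hmu : Bclosed tau mu).
       { unfold Bclosed. apply L_tau_comp; auto. intros [|]; [exists l1 | exists l2]; split; auto;
         intro x; unfold negF, mu, Bneg; simpl; apply negb_involutive. }
       unfold cut in *.
       assert (Hne : forall z, mu z <> B1).
       { intros z E. unfold mu, B1 in E. injection E; intros E2 E1.
         apply negb_true_iff in E1. apply negb_true_iff in E2.
         destruct (Hcov z) as [Hz|Hz]; [apply HU, (proj1 (Ble_bi true _)) in Hz | apply HV, (proj1 (Ble_bi false _)) in Hz];
         simpl in *; congruence. }
       apply NNPP; intro Hn. apply (Hb mu Hmu Hne). intro y. apply Ble_iff. intros [|] Hgy; simpl in *.
       + apply negb_true_iff. apply not_true_iff_false. intro E. apply Hn. left.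
         unfold P. apply pb_true. exists y. split; auto. apply HU, (proj2 (Ble_bi true _)). exact E.
       + apply negb_true_iff. apply not_true_iff_false. intro E. apply Hn. right.
         unfold P. apply pb_true. exists y. split; auto. apply HV, (proj2 (Ble_bi false _)). exact E. }
   destruct (Hds _ _ Hdp) as [x [Hx Hu]]. exists x. split.
   + apply (L_point X tau Htau (P true) (P false) g Hcl Hch x). exact Hx.
   + intros y Hy. apply Hu. apply (L_point X tau Htau (P true) (P false) g Hcl Hch y). exact Hy.
 - intros H ptt pff Hdp.
   assert (Hfh : forall i, frame_hom (opens tau (bi i)) (if i then ptt else pff)).
   { destruct Hdp as [A1 [A2 _]]. intros [|]; assumption. }
   set (G := fun (i : bool) y => pb (forall U, opens tau (bi i) U -> U y -> (if i then ptt else pff) U = true)).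
   set (g := fun y => (G true y, G false y)).
   assert (Hg : forall i y, proj i (g y) = true <->
      forall U, opens tau (bi i) U -> U y -> (if i then ptt else pff) U = true).
   { intros [|] y; unfold g, G; simpl; apply pb_true. }
   clearbody g.
   assert (Hch : forall i U, opens tau (bi i) U ->
     ((if i then ptt else pff) U = true <-> exists y, proj i (g y) = true /\ U y)).
   { intros i U HU. destruct (Hfh i) as [Htop [Hmeet Hjn]]. split.
     - intro HpU. apply NNPP; intro Hn.
       set (S := fun W => exists U', opens tau (bi i) U' /\ (if i then ptt else pff) U' = false
                                   /\ W = setI X U U').
       assert (HS : forall W, S W -> opens tau (bi i) W).
       { intros W [U' [HU' [_ ->]]]. apply L_open_meet; auto. }
       assert (EU : U = bigcup X S).
       { apply functional_extensionality; intro z; apply propositional_extensionality. split.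
         - intro Hz. assert (H0 : ~ proj i (g z) = true) by (intro Hgz; apply Hn; exists z; auto).
           rewrite Hg in H0. apply not_all_ex_not in H0. destruct H0 as [U' H0].
           apply imply_to_and in H0. destruct H0 as [HU' H0].
           apply imply_to_and in H0. destruct H0 as [HzU' H0]. apply not_true_is_false in H0.
           exists (setI X U U'). split. exists U'; auto. unfold setI; auto.
         - intros [W [[U' [_ [_ ->]]] Hz]]. exact (proj1 Hz). }
       assert (Hb := proj1 (Hjn S HS)). rewrite <- EU in Hb.
       destruct (Hb HpU) as [W [[U' [HU' [HpU' ->]]] HW]].
       rewrite Hmeet in HW; auto. rewrite HpU', andb_false_r in HW. discriminate.
     - intros [y [Hy HUy]]. rewrite Hg in Hy. exact (Hy U HU HUy). }
   assert (Hcl : Bclosed tau g).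
   { unfold Bclosed. apply L_tau_comp; auto. intro i.
     set (F := fun l => tau l /\ (if i then ptt else pff) (fun z => proj i (l z) = true) = false).
     exists (supF F). split. { apply Htau. intros l [Hl _]; exact Hl. }
     intro x. apply eq_true_iff_eq. unfold negF. rewrite proj_neg.
     unfold supF; rewrite Bsup_proj. rewrite negb_true_iff.
     split.
     - intro Hf. rewrite <- not_true_iff_false in Hf. rewrite Hg in Hf.
       apply not_all_ex_not in Hf. destruct Hf as [U' H0].
       apply imply_to_and in H0. destruct H0 as [[l [Hl HUl]] H0].
       apply imply_to_and in H0. destruct H0 as [HzU' H0]. apply not_true_is_false in H0.
       assert (EU : U' = fun z => proj i (l z) = true).
       { apply functional_extensionality; intro z; apply propositional_extensionality.
         unfold cut in HUl. rewrite HUl, Ble_bi. tauto. }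
       exists (l x). split.
       + exists l. split; auto. split; auto. rewrite <- EU. exact H0.
       + rewrite EU in HzU'. exact HzU'.
     - intros [b [[l [[Hl Hpl] <-]] Hlx]]. apply not_true_is_false. rewrite Hg. intro Hall.
       specialize (Hall _ (L_open_cl X tau i l Hl) Hlx). congruence. }
   assert (Hne : forall i, exists y, proj i (g y) = true).
   { intro i. destruct (Hfh i) as [Htop _]. apply (Hch i (setT X) (L_open_T X tau Htau i)) in Htop.
     destruct Htop as [y [Hy _]]; eauto. }
   assert (Hirr : irreducible tau g).
   { split; [exact Hcl | split].
     - intro b. apply Beq. intro i. rewrite L_subX_proj. unfold constB. destruct (Hne i) as [y Hy].
       split; [intro H0; exact (H0 y Hy) | intros H0 _ _; exact H0].
     - intros m1 m2 Hm1 Hm2. apply Beq; intro i. rewrite proj_join, orb_true_iff, !L_subX_proj. split.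
       + intro Hall. apply NNPP; intro Hn. apply not_or_and in Hn. destruct Hn as [N1 N2].
         apply not_all_ex_not in N1; destruct N1 as [y1 N1]; apply imply_to_and in N1;
           destruct N1 as [G1 M1]; apply not_true_is_false in M1.
         apply not_all_ex_not in N2; destruct N2 as [y2 N2]; apply imply_to_and in N2;
           destruct N2 as [G2 M2]; apply not_true_is_false in M2.
         pose proof (L_open_compl_closed X tau i m1 Hm1) as O1.
         pose proof (L_open_compl_closed X tau i m2 Hm2) as O2.
         destruct (Hfh i) as [_ [Hmeet _]].
         assert (P1 := proj2 (Hch i _ O1) (ex_intro _ y1 (conj G1 M1))).
         assert (P2 := proj2 (Hch i _ O2) (ex_intro _ y2 (conj G2 M2))).
         assert (P12 : (if i then ptt else pff) (setI X (fun z => proj i (m1 z) = false)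
                                                    (fun z => proj i (m2 z) = false)) = true)
           by (rewrite Hmeet; auto; rewrite P1, P2; reflexivity).
         apply (Hch i _ (L_open_meet X tau Htau i _ _ O1 O2)) in P12.
         destruct P12 as [y [Hy [E1 E2]]]. specialize (Hall y Hy). unfold joinF in Hall.
         rewrite proj_join, E1, E2 in Hall. discriminate.
       + intros [H0|H0] x Hx; unfold joinF; rewrite proj_join, (H0 x Hx); auto; apply orb_true_r. }
   destruct Hdp as [_ [_ [Ha' Hb']]].
   assert (Ha : forall mu, Bclosed tau mu -> (forall z, mu z <> B0) ->
        leF (cmeet Btt g) mu \/ leF (cmeet Bff g) mu).
   { intros mu Hmu Hne0.
     pose proof (L_open_compl_closed X tau true mu Hmu) as O1.
     pose proof (L_open_compl_closed X tau false mu Hmu) as O2.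
     assert (Hdisj : forall z, ~ ((fun z => proj true (mu z) = false) z /\ (fun z => proj false (mu z) = false) z)).
     { intros z [E1 E2]. apply (Hne0 z). simpl in *. destruct (mu z) as [a b]; simpl in *; subst; reflexivity. }
     destruct (Ha' _ _ O1 O2 Hdisj) as [H1|H1]; [left|right]; intros y; unfold cmeet; apply Ble_iff;
       intros [|]; simpl; intro Hy; try discriminate; apply NNPP; intro Hn; apply not_true_is_false in Hn.
     + assert (Ht : (if true then ptt else pff) (fun z => proj true (mu z) = false) = true)
         by (apply (Hch true _ O1); exists y; auto).
       exact (eq_true_false_abs _ Ht H1).
     + assert (Ht : (if false then ptt else pff) (fun z => proj false (mu z) = false) = true)
         by (apply (Hch false _ O2); exists y; auto).
       exact (eq_true_false_abs _ Ht H1). }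
   assert (Hb : forall mu, Bclosed tau mu -> (forall z, mu z <> B1) -> ~ leF g mu).
   { intros mu Hmu Hne1 Hle.
     pose proof (L_open_compl_closed X tau true mu Hmu) as O1.
     pose proof (L_open_compl_closed X tau false mu Hmu) as O2.
     assert (Hcov : forall z, (fun z => proj true (mu z) = false) z \/ (fun z => proj false (mu z) = false) z).
     { intro z. simpl. destruct (mu z) as [[|] [|]] eqn:E; simpl; auto. exfalso; exact (Hne1 z E). }
     destruct (Hb' _ _ O1 O2 Hcov) as [H1|H1].
     + apply (Hch true _ O1) in H1. destruct H1 as [y [Hy Ey]].
       specialize (Hle y). rewrite Ble_iff in Hle. specialize (Hle true Hy). congruence.
     + apply (Hch false _ O2) in H1. destruct H1 as [y [Hy Ey]].
       specialize (Hle y). rewrite Ble_iff in Hle. specialize (Hle false Hy). congruence. }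
   destruct (H g Hirr Ha Hb) as [x [Hx Hu]]. exists x. split.
   + apply (L_point X tau Htau ptt pff g Hcl Hch x). exact Hx.
   + intros y Hy. apply Hu. apply (L_point X tau Htau ptt pff g Hcl Hch y). exact Hy.
Qed.
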